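(* Let $\Xi$ be smooth with $\Xi(0,0,0,0)=0$ and $\frac{\partial\Xi}{\partial\psi}(0,0,0,0)<0$, and let $T>0$. There exist $C_\Xi>0$ and $\varepsilon_2>0$ such that if $\omega_{1i}(t,\psi),\omega_{2i}(t,\psi)$ ($i=1,2,3$) are $C^1$ functions, $T$-periodic in $t$, with $\|\omega_{1i}\|_{C^1}\le\varepsilon_2$ and $\|\omega_{2i}\|_{C^1}\le\varepsilon_2$, and $\psi_1^*,\psi_2^*$ are the $T$-periodic solutions of $\psi_j'(t)=\Xi(\psi_j(t),\omega_{j1}(t,\psi_j(t)),\omega_{j2}(t,\psi_j(t)),\omega_{j3}(t,\psi_j(t)))$, $j=1,2$, then $$\|\psi_1^*-\psi_2^*\|\le(1+C_\Xi T\varepsilon_2)\exp(\Xi_{\psi,0}T)\frac1{\Xi_{\psi,0}}\sum_{i=1}^3\Xi_{\omega_{i,0}}\|\omega_{1i}-\omega_{2i}\|,$$ $$\|\psi_1^{*\prime}-\psi_2^{*\prime}\|\le(1+C_\Xi T\varepsilon_2)\exp(\Xi_{\psi,0}T)\sum_{i=1}^3\Xi_{\omega_{i,0}}\|\omega_{1i}-\omega_{2i}\|+(1+C_\Xi\varepsilon_2)\sum_{i=1}^3\Xi_{\omega_{i,0}}\|\omega_{1i}-\omega_{2i}\|.$$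
   Context: $\|\cdot\|$ denotes the sup ($C^0$) norm. $\Xi_{\psi,0}=\big|\frac{\partial\Xi}{\partial\psi}(0,0,0,0)\big|$ and $\Xi_{\omega_{i,0}}=1+\big|\frac{\partial\Xi}{\partial\omega_i}(0,0,0,0)\big|$ for $i=1,2,3$. For small $C^1$ data each such equation has a unique $T$-periodic solution near $0$. *)

(* Defs.v *)
From Stdlib Require Import Reals List.
From Coquelicot Require Import Coquelicot.
Open Scope R_scope.

(* Points of R^n are represented as nat -> R (coordinates 0..n-1 used). *)
Definition upd (p : nat -> R) (i : nat) (x : R) : nat -> R :=
  fun j => if Nat.eqb j i then x else p j.

Definition pderiv (i : nat) (g : (nat -> R) -> R) : (nat -> R) -> R :=
  fun p => Derive (fun x => g (upd p i x)) (p i).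

Definition iter_pderiv (l : list nat) (g : (nat -> R) -> R) : (nat -> R) -> R :=
  fold_right pderiv g l.

Definition cont_n (n : nat) (g : (nat -> R) -> R) : Prop :=
  forall p eps, 0 < eps -> exists delta, 0 < delta /\
    forall q, (forall j, (j < n)%nat -> Rabs (q j - p j) < delta) ->
      Rabs (g q - g p) < eps.

Definition smooth_n (n : nat) (g : (nat -> R) -> R) : Prop :=
  forall l : list nat, List.Forall (fun i => (i < n)%nat) l ->
    cont_n n (iter_pderiv l g) /\
    (forall i p, (i < n)%nat ->
       ex_derive (fun x => iter_pderiv l g (upd p i x)) (p i)).

Definition lift4 (Xi : R -> R -> R -> R -> R) : (nat -> R) -> R :=
  fun p => Xi (p 0%nat) (p 1%nat) (p 2%nat) (p 3%nat).

Definition smooth4 (Xi : R -> R -> R -> R -> R) : Prop := smooth_n 4 (lift4 Xi).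

Definition origin : nat -> R := fun _ => 0.

(* partial derivative of Xi in its i-th argument (0 = psi, 1..3 = omega_i)
   at (0,0,0,0) *)
Definition dXi0 (Xi : R -> R -> R -> R -> R) (i : nat) : R :=
  pderiv i (lift4 Xi) origin.

Definition Xi_psi0 (Xi : R -> R -> R -> R -> R) : R := Rabs (dXi0 Xi 0).
Definition Xi_om0 (Xi : R -> R -> R -> R -> R) (i : nat) : R := 1 + Rabs (dXi0 Xi i).

Definition cont2 (w : R -> R -> R) : Prop :=
  forall t x, continuous (fun p : R * R => w (fst p) (snd p)) (t, x).

Definition dt (w : R -> R -> R) : R -> R -> R := fun t x => Derive (fun s => w s x) t.
Definition dpsi (w : R -> R -> R) : R -> R -> R := fun t x => Derive (fun y => w t y) x.

Definition C1_2 (w : R -> R -> R) : Prop :=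
  cont2 w /\
  (forall t x, ex_derive (fun s => w s x) t) /\
  (forall t x, ex_derive (fun y => w t y) x) /\
  cont2 (dt w) /\ cont2 (dpsi w).

Definition C1_norm_le (w : R -> R -> R) (e : R) : Prop :=
  forall t x, Rabs (w t x) <= e /\ Rabs (dt w t x) <= e /\ Rabs (dpsi w t x) <= e.

Definition periodic2 (T : R) (w : R -> R -> R) : Prop :=
  forall t x, w (t + T) x = w t x.

Definition periodic1 (T : R) (f : R -> R) : Prop :=
  forall t, f (t + T) = f t.

Definition supnorm1 (f : R -> R) : R :=
  real (Lub_Rbar (fun y => exists t, y = Rabs (f t))).
Definition supnorm2 (f : R -> R -> R) : R :=
  real (Lub_Rbar (fun y => exists t x, y = Rabs (f t x))).

Definition periodic_solution (Xi : R -> R -> R -> R -> R) (T : R)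
    (w1 w2 w3 : R -> R -> R) (psi : R -> R) : Prop :=
  periodic1 T psi /\
  forall t, is_derive psi t (Xi (psi t) (w1 t (psi t)) (w2 t (psi t)) (w3 t (psi t))).

(* Main.v *)
Require Import Defs.
From Stdlib Require Import Reals List Lra Lia.
From Coquelicot Require Import Coquelicot.
Open Scope R_scope.

Lemma der_cont (f : R -> R) x : ex_derive f x -> continuity_pt f x.
Proof. intro H. apply continuity_pt_filterlim. exact (@ex_derive_continuous R_AbsRing R_NormedModule f x H). Qed.

Lemma per_bound (d dd : R -> R) T K : 0 < T -> (forall t, d (t+T) = d t) ->
  (forall t, is_derive d t (dd t)) -> (forall t, K < d t -> dd t < 0) ->
  forall t, d t <= K.
Proof.
  intros HT Hp Hd Hneg t0.
  destruct (Rle_or_lt (d t0) K) as [h|h]; [exact h|exfalso].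
  destruct (continuity_ab_maj d (t0 - 2*T) t0) as [Mx [HM HMr]].
  - lra.
  - intros c _. apply der_cont. eexists; apply Hd.
  - assert (Hp1 : d (t0 - T) = d t0).
    { replace t0 with (t0 - T + T) at 2 by ring. now rewrite Hp. }
    assert (Hp2 : d (t0 - 2*T) = d t0).
    { rewrite <- Hp1. replace (t0 - T) with (t0 - 2*T + T) by ring. now rewrite Hp. }
    assert (Hint : exists m, t0 - 2*T < m < t0 /\ d m = d Mx).
    { destruct HMr as [H1 H2]. destruct (Rle_lt_or_eq_dec _ _ H1) as [H1'|H1'].
      - destruct (Rle_lt_or_eq_dec _ _ H2) as [H2'|H2'].
        + exists Mx; split; [lra|reflexivity].
        + exists (t0 - T). split; [lra|]. rewrite Hp1, H2'. reflexivity.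
      - exists (t0 - T). split; [lra|]. rewrite Hp1, <- H1', Hp2. reflexivity. }
    destruct Hint as [m [Hm Hdm]].
    assert (pr : derivable_pt d m).
    { exists (dd m). apply is_derive_Reals. apply Hd. }
    assert (H0 := deriv_maximum d (t0 - 2*T) t0 m pr (proj1 Hm) (proj2 Hm)).
    rewrite (derive_pt_eq_0 d m (dd m) pr) in H0.
    2: { apply is_derive_Reals. apply Hd. }
    assert (dd m = 0).
    { apply H0. intros x H1 H2. rewrite Hdm. apply HM. lra. }
    assert (K < d m). { rewrite Hdm. assert (d t0 <= d Mx) by (apply HM; lra). lra. }
    specialize (Hneg m H1). lra.
Qed.

Lemma between_abs u v c B : Rmin u v <= c <= Rmax u v -> Rabs u <= B -> Rabs v <= B -> Rabs c <= B.
Proof.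
  intros [H1 H2] Hu Hv. apply Rabs_le_between in Hu. apply Rabs_le_between in Hv.
  apply Rabs_le_between. unfold Rmin, Rmax in *.
  destruct (Rle_dec u v); lra.
Qed.

Lemma mvt_bound (f : R -> R) a b L :
  (forall x, Rmin a b <= x <= Rmax a b -> ex_derive f x /\ Rabs (Derive f x) <= L) ->
  Rabs (f b - f a) <= L * Rabs (b - a).
Proof.
  intros H.
  destruct (MVT_gen f a b (Derive f)) as [c [Hc Heq]].
  - intros x Hx. apply Derive_correct. apply H. lra.
  - intros x Hx. apply der_cont. apply H. lra.
  - rewrite Heq, Rabs_mult. apply Rmult_le_compat_r. apply Rabs_pos. apply H. exact Hc.
Qed.

Lemma sup1_le (f : R -> R) B : (forall t, Rabs (f t) <= B) -> supnorm1 f <= B.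
Proof.
  intros H. unfold supnorm1.
  destruct (Lub_Rbar_correct (fun y => exists t, y = Rabs (f t))) as [Hub Hl].
  assert (H1 : Rbar_le (Lub_Rbar (fun y => exists t, y = Rabs (f t))) (Finite B)).
  { apply Hl. intros x [t ->]. simpl. apply H. }
  assert (H2 : Rbar_le (Finite (Rabs (f 0))) (Lub_Rbar (fun y => exists t, y = Rabs (f t)))).
  { apply Hub. exists 0; reflexivity. }
  destruct (Lub_Rbar _); simpl in *; try contradiction. exact H1.
Qed.

Lemma sup2_ge (f : R -> R -> R) B : (forall t x, Rabs (f t x) <= B) ->
  forall t x, Rabs (f t x) <= supnorm2 f.
Proof.
  intros H t x. unfold supnorm2.
  destruct (Lub_Rbar_correct (fun y => exists t x, y = Rabs (f t x))) as [Hub Hl].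
  assert (H1 : Rbar_le (Lub_Rbar (fun y => exists t x, y = Rabs (f t x))) (Finite B)).
  { apply Hl. intros y [t' [x' ->]]. simpl. apply H. }
  assert (H2 : Rbar_le (Finite (Rabs (f t x))) (Lub_Rbar (fun y => exists t x, y = Rabs (f t x)))).
  { apply Hub. exists t, x; reflexivity. }
  destruct (Lub_Rbar _); simpl in *; try contradiction. exact H2.
Qed.

Definition pt (y a1 a2 a3 : R) : nat -> R :=
  fun j => match j with 0%nat => y | 1%nat => a1 | 2%nat => a2 | _ => a3 end.

Lemma part_cont Xi i eps : smooth4 Xi -> (i < 4)%nat -> 0 < eps ->
  exists d, 0 < d /\ forall y a1 a2 a3, Rabs y < d -> Rabs a1 < d -> Rabs a2 < d -> Rabs a3 < d ->
   Rabs (pderiv i (lift4 Xi) (pt y a1 a2 a3) - dXi0 Xi i) < eps.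
Proof.
  intros Hs Hi He.
  destruct (Hs (i :: nil)) as [Hc _]. { constructor; [exact Hi| constructor]. }
  destruct (Hc origin eps He) as [d [Hd H]]. exists d; split; [exact Hd|].
  intros y a1 a2 a3 H0 H1 H2 H3. apply (H (pt y a1 a2 a3)).
  intros j Hj. unfold origin. rewrite Rminus_0_r.
  destruct j as [|[|[|[|j]]]]; simpl; auto; lia.
Qed.

Lemma part_ex Xi i y a1 a2 a3 : smooth4 Xi -> (i < 4)%nat ->
  ex_derive (fun x => lift4 Xi (upd (pt y a1 a2 a3) i x)) (pt y a1 a2 a3 i).
Proof.
  intros Hs Hi. destruct (Hs nil) as [_ H]. constructor. exact (H i _ Hi).
Qed.

Lemma core (Xi : R -> R -> R -> R -> R) A K1 K2 K3 r e
  (Hb : forall y a1 a2 a3, Rabs y <= r -> Rabs a1 <= e -> Rabs a2 <= e -> Rabs a3 <= e ->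
     ex_derive (fun x => Xi x a1 a2 a3) y /\ ex_derive (fun x => Xi y x a2 a3) a1 /\
     ex_derive (fun x => Xi y a1 x a3) a2 /\ ex_derive (fun x => Xi y a1 a2 x) a3 /\
     -3*A/2 <= Derive (fun x => Xi x a1 a2 a3) y <= -A/2 /\
     Rabs (Derive (fun x => Xi y x a2 a3) a1) <= K1 /\
     Rabs (Derive (fun x => Xi y a1 x a3) a2) <= K2 /\
     Rabs (Derive (fun x => Xi y a1 a2 x) a3) <= K3)
  y1 y2 a1 a2 a3 b1 b2 b3 :
  Rabs y1 <= r -> Rabs y2 <= r -> Rabs a1 <= e -> Rabs a2 <= e -> Rabs a3 <= e ->
  Rabs b1 <= e -> Rabs b2 <= e -> Rabs b3 <= e ->
  exists D, -3*A/2 <= D <= -A/2 /\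
    Rabs (Xi y1 a1 a2 a3 - Xi y2 b1 b2 b3 - D*(y1-y2)) <=
      K1*Rabs (a1-b1) + K2*Rabs (a2-b2) + K3*Rabs (a3-b3).
Proof.
  intros Hy1 Hy2 Ha1 Ha2 Ha3 Hb1 Hb2 Hb3.
  destruct (MVT_gen (fun x => Xi x a1 a2 a3) y2 y1 (Derive (fun x => Xi x a1 a2 a3))) as [c [Hc Heq]].
  - intros x Hx. apply Derive_correct.
    assert (Rabs x <= r) by (apply (between_abs y2 y1); try assumption; lra).
    destruct (Hb x a1 a2 a3) as [HH _]; assumption.
  - intros x Hx. apply der_cont.
    assert (Rabs x <= r) by (apply (between_abs y2 y1); try assumption; lra).
    destruct (Hb x a1 a2 a3) as [HH _]; assumption.
  - assert (Hcr : Rabs c <= r) by (apply (between_abs y2 y1); assumption).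
    exists (Derive (fun x => Xi x a1 a2 a3) c). split. { destruct (Hb c a1 a2 a3) as [_ [_ [_ [_ [HH _]]]]]; assumption. }
    assert (E1 : Rabs (Xi y2 a1 a2 a3 - Xi y2 b1 a2 a3) <= K1 * Rabs (a1 - b1)).
    { apply (mvt_bound (fun x => Xi y2 x a2 a3)). intros x Hx.
      assert (Rabs x <= e) by (apply (between_abs b1 a1); assumption). destruct (Hb y2 x a2 a3) as [_ [HH1 [_ [_ [_ [HH2 _]]]]]]; try assumption; split; assumption. }
    assert (E2 : Rabs (Xi y2 b1 a2 a3 - Xi y2 b1 b2 a3) <= K2 * Rabs (a2 - b2)).
    { apply (mvt_bound (fun x => Xi y2 b1 x a3)). intros x Hx.
      assert (Rabs x <= e) by (apply (between_abs b2 a2); assumption). destruct (Hb y2 b1 x a3) as [_ [_ [HH1 [_ [_ [_ [HH2 _]]]]]]]; try assumption; split; assumption. }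
    assert (E3 : Rabs (Xi y2 b1 b2 a3 - Xi y2 b1 b2 b3) <= K3 * Rabs (a3 - b3)).
    { apply (mvt_bound (fun x => Xi y2 b1 b2 x)). intros x Hx.
      assert (Rabs x <= e) by (apply (between_abs b3 a3); assumption). destruct (Hb y2 b1 b2 x) as [_ [_ [_ [HH1 [_ [_ [_ HH2]]]]]]]; try assumption; split; assumption. }
    replace (Xi y1 a1 a2 a3 - Xi y2 b1 b2 b3 - Derive (fun x => Xi x a1 a2 a3) c * (y1 - y2))
      with ((Xi y2 a1 a2 a3 - Xi y2 b1 a2 a3) + (Xi y2 b1 a2 a3 - Xi y2 b1 b2 a3)
            + (Xi y2 b1 b2 a3 - Xi y2 b1 b2 b3)) by (rewrite <- Heq; ring).
    eapply Rle_trans. apply Rabs_triang. eapply Rle_trans.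
    apply Rplus_le_compat_r. apply Rabs_triang. lra.
Qed.

Lemma w_lip w e : C1_2 w -> C1_norm_le w e -> forall t y1 y2, Rabs (w t y1 - w t y2) <= e * Rabs (y1 - y2).
Proof.
  intros [_ [_ [Hd _]]] Hn t y1 y2. apply (mvt_bound (fun y => w t y)).
  intros x _. split. apply Hd. exact (proj2 (proj2 (Hn t x))).
Qed.

Lemma w_diff w1 w2 e : C1_norm_le w1 e -> C1_norm_le w2 e ->
  forall t x, Rabs (w1 t x - w2 t x) <= supnorm2 (fun t x => w1 t x - w2 t x).
Proof.
  intros H1 H2. apply (sup2_ge _ (e + e)). intros t x.
  eapply Rle_trans. apply Rabs_triang. rewrite Rabs_Ropp.
  apply Rplus_le_compat; [apply H1|apply H2].
Qed.

Lemma lt_abs_bound D c e0 : Rabs (D - c) < e0 -> e0 <= 1 -> Rabs D <= 1 + Rabs c.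
Proof.
  intros H He. replace D with ((D - c) + c) by ring.
  eapply Rle_trans. apply Rabs_triang. lra.
Qed.
Lemma isd_minus (f g : R -> R) x a b : is_derive f x a -> is_derive g x b -> is_derive (fun t => f t - g t) x (a - b).
Proof. intros H1 H2. exact (is_derive_minus f g x a b H1 H2). Qed.
Lemma isd_opp (f : R -> R) x a : is_derive f x a -> is_derive (fun t => - f t) x (- a).
Proof. intros H1. exact (is_derive_opp f x a H1). Qed.

Theorem theoremA2 (Xi : R -> R -> R -> R -> R) (T : R) :
  smooth4 Xi -> Xi 0 0 0 0 = 0 -> dXi0 Xi 0 < 0 -> 0 < T ->
  exists CXi eps2 r, 0 < CXi /\ 0 < eps2 /\ 0 < r /\
    forall (w11 w12 w13 w21 w22 w23 : R -> R -> R) (psi1 psi2 : R -> R),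
      (forall w, List.In w (w11 :: w12 :: w13 :: w21 :: w22 :: w23 :: nil) ->
         C1_2 w /\ periodic2 T w /\ C1_norm_le w eps2) ->
      periodic_solution Xi T w11 w12 w13 psi1 ->
      periodic_solution Xi T w21 w22 w23 psi2 ->
      (forall t, Rabs (psi1 t) <= r) -> (forall t, Rabs (psi2 t) <= r) ->
      let S := Xi_om0 Xi 1 * supnorm2 (fun t x => w11 t x - w21 t x)
             + Xi_om0 Xi 2 * supnorm2 (fun t x => w12 t x - w22 t x)
             + Xi_om0 Xi 3 * supnorm2 (fun t x => w13 t x - w23 t x) in
      supnorm1 (fun t => psi1 t - psi2 t)
        <= (1 + CXi * T * eps2) * exp (Xi_psi0 Xi * T) * / Xi_psi0 Xi * S /\
      supnorm1 (fun t => Derive psi1 t - Derive psi2 t)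
        <= (1 + CXi * T * eps2) * exp (Xi_psi0 Xi * T) * S + (1 + CXi * eps2) * S.
Proof.
  intros Hs _ Hneg HT.
  set (A := - dXi0 Xi 0).
  assert (HA : 0 < A) by (unfold A; lra).
  assert (HXp : Xi_psi0 Xi = A) by (unfold Xi_psi0, A; rewrite Rabs_left; lra).
  set (K1 := Xi_om0 Xi 1). set (K2 := Xi_om0 Xi 2). set (K3 := Xi_om0 Xi 3).
  assert (HK1 : 1 <= K1) by (unfold K1, Xi_om0; pose proof (Rabs_pos (dXi0 Xi 1)); lra).
  assert (HK2 : 1 <= K2) by (unfold K2, Xi_om0; pose proof (Rabs_pos (dXi0 Xi 2)); lra).
  assert (HK3 : 1 <= K3) by (unfold K3, Xi_om0; pose proof (Rabs_pos (dXi0 Xi 3)); lra).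
  set (e0 := Rmin 1 (A/2)).
  assert (He0 : 0 < e0) by (unfold e0; apply Rmin_pos; lra).
  assert (He01 : e0 <= 1) by apply Rmin_l.
  assert (He02 : e0 <= A/2) by apply Rmin_r.
  destruct (part_cont Xi 0 e0 Hs ltac:(lia) He0) as [d0 [Hd0 P0]].
  destruct (part_cont Xi 1 e0 Hs ltac:(lia) He0) as [d1 [Hd1 P1]].
  destruct (part_cont Xi 2 e0 Hs ltac:(lia) He0) as [d2 [Hd2 P2]].
  destruct (part_cont Xi 3 e0 Hs ltac:(lia) He0) as [d3 [Hd3 P3]].
  set (dl := Rmin (Rmin d0 d1) (Rmin d2 d3)).
  assert (Hdl : 0 < dl) by (unfold dl; repeat apply Rmin_pos; assumption).
  assert (Hdl0 : dl <= d0) by (unfold dl; eapply Rle_trans; apply Rmin_l).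
  assert (Hdl1 : dl <= d1) by (unfold dl; eapply Rle_trans; [apply Rmin_l|apply Rmin_r]).
  assert (Hdl2 : dl <= d2) by (unfold dl; eapply Rle_trans; [apply Rmin_r|apply Rmin_l]).
  assert (Hdl3 : dl <= d3) by (unfold dl; eapply Rle_trans; apply Rmin_r).
  set (Kt := K1 + K2 + K3).
  set (eps2 := Rmin (dl/2) (A/(4*Kt))).
  assert (He2 : 0 < eps2) by (unfold eps2; apply Rmin_pos; [lra| apply Rdiv_lt_0_compat; unfold Kt; lra]).
  assert (He2a : eps2 <= dl/2) by apply Rmin_l.
  assert (He2b : Kt * eps2 <= A/4).
  { assert (eps2 <= A/(4*Kt)) by apply Rmin_r.
    assert (0 < Kt) by (unfold Kt; lra).
    apply Rmult_le_compat_l with (r := Kt) in H; [|lra].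
    replace (Kt * (A / (4*Kt))) with (A/4) in H by (field; lra). exact H. }
  exists (8 / (T * eps2)), eps2, (dl/2).
  split; [apply Rdiv_lt_0_compat; [lra| apply Rmult_lt_0_compat; lra]|].
  split; [exact He2|]. split; [lra|].
  intros w11 w12 w13 w21 w22 w23 psi1 psi2 Hw [Hper1 Hps1] [Hper2 Hps2] Hr1 Hr2 S.
  assert (Hb : forall y a1 a2 a3, Rabs y <= dl/2 -> Rabs a1 <= eps2 -> Rabs a2 <= eps2 -> Rabs a3 <= eps2 ->
     ex_derive (fun x => Xi x a1 a2 a3) y /\ ex_derive (fun x => Xi y x a2 a3) a1 /\
     ex_derive (fun x => Xi y a1 x a3) a2 /\ ex_derive (fun x => Xi y a1 a2 x) a3 /\
     -3*A/2 <= Derive (fun x => Xi x a1 a2 a3) y <= -A/2 /\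
     Rabs (Derive (fun x => Xi y x a2 a3) a1) <= K1 /\
     Rabs (Derive (fun x => Xi y a1 x a3) a2) <= K2 /\
     Rabs (Derive (fun x => Xi y a1 a2 x) a3) <= K3).
  { intros y a1 a2 a3 Hy Ha1 Ha2 Ha3.
    assert (Hsm : forall z, Rabs z <= dl/2 -> Rabs z < d0 /\ Rabs z < d1 /\ Rabs z < d2 /\ Rabs z < d3)
      by (intros; repeat split; lra).
    destruct (Hsm y Hy) as [y0 [y1 [y2 y3]]].
    destruct (Hsm a1 ltac:(lra)) as [a10 [a11 [a12 a13]]].
    destruct (Hsm a2 ltac:(lra)) as [a20 [a21 [a22 a23]]].
    destruct (Hsm a3 ltac:(lra)) as [a30 [a31 [a32 a33]]].
    pose proof (P0 y a1 a2 a3 y0 a10 a20 a30) as Q0.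
    pose proof (P1 y a1 a2 a3 y1 a11 a21 a31) as Q1.
    pose proof (P2 y a1 a2 a3 y2 a12 a22 a32) as Q2.
    pose proof (P3 y a1 a2 a3 y3 a13 a23 a33) as Q3.
    change (Rabs (Derive (fun x => Xi x a1 a2 a3) y - dXi0 Xi 0) < e0) in Q0.
    change (Rabs (Derive (fun x => Xi y x a2 a3) a1 - dXi0 Xi 1) < e0) in Q1.
    change (Rabs (Derive (fun x => Xi y a1 x a3) a2 - dXi0 Xi 2) < e0) in Q2.
    change (Rabs (Derive (fun x => Xi y a1 a2 x) a3 - dXi0 Xi 3) < e0) in Q3.
    apply lt_abs_bound in Q1; [|exact He01].
    apply lt_abs_bound in Q2; [|exact He01].
    apply lt_abs_bound in Q3; [|exact He01].
    apply Rabs_lt_between in Q0. assert (HAd : dXi0 Xi 0 = -A) by (unfold A; ring).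
    split. exact (part_ex Xi 0 y a1 a2 a3 Hs ltac:(lia)).
    split. exact (part_ex Xi 1 y a1 a2 a3 Hs ltac:(lia)).
    split. exact (part_ex Xi 2 y a1 a2 a3 Hs ltac:(lia)).
    split. exact (part_ex Xi 3 y a1 a2 a3 Hs ltac:(lia)).
    split. lra.
    split. exact Q1. split. exact Q2. exact Q3. }
  destruct (Hw w11 ltac:(simpl; tauto)) as [C11 [_ N11]].
  destruct (Hw w12 ltac:(simpl; tauto)) as [C12 [_ N12]].
  destruct (Hw w13 ltac:(simpl; tauto)) as [C13 [_ N13]].
  destruct (Hw w21 ltac:(simpl; tauto)) as [C21 [_ N21]].
  destruct (Hw w22 ltac:(simpl; tauto)) as [C22 [_ N22]].
  destruct (Hw w23 ltac:(simpl; tauto)) as [C23 [_ N23]].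
  pose proof (w_diff w11 w21 eps2 N11 N21) as W1.
  pose proof (w_diff w12 w22 eps2 N12 N22) as W2.
  pose proof (w_diff w13 w23 eps2 N13 N23) as W3.
  pose proof (w_lip w11 eps2 C11 N11) as L1.
  pose proof (w_lip w12 eps2 C12 N12) as L2.
  pose proof (w_lip w13 eps2 C13 N13) as L3.
  set (D1 := supnorm2 (fun t x => w11 t x - w21 t x)) in *.
  set (D2 := supnorm2 (fun t x => w12 t x - w22 t x)) in *.
  set (D3 := supnorm2 (fun t x => w13 t x - w23 t x)) in *.
  assert (HD1 : 0 <= D1) by (eapply Rle_trans; [apply Rabs_pos| apply (W1 0 0)]).
  assert (HD2 : 0 <= D2) by (eapply Rle_trans; [apply Rabs_pos| apply (W2 0 0)]).
  assert (HD3 : 0 <= D3) by (eapply Rle_trans; [apply Rabs_pos| apply (W3 0 0)]).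
  assert (HSe : S = K1 * D1 + K2 * D2 + K3 * D3) by reflexivity.
  assert (HS0 : 0 <= S) by (rewrite HSe; nra).
  clearbody S.
  pose (E1 := fun t => Xi (psi1 t) (w11 t (psi1 t)) (w12 t (psi1 t)) (w13 t (psi1 t))).
  pose (E2 := fun t => Xi (psi2 t) (w21 t (psi2 t)) (w22 t (psi2 t)) (w23 t (psi2 t))).
  assert (Hdif : forall (w1 w2 : R -> R -> R) t y1 y2 Dd,
     Rabs (w1 t y1 - w1 t y2) <= eps2 * Rabs (y1 - y2) -> Rabs (w1 t y2 - w2 t y2) <= Dd ->
     Rabs (w1 t y1 - w2 t y2) <= eps2 * Rabs (y1 - y2) + Dd).
  { intros w1 w2 t y1 y2 Dd Ha Hb'.
    replace (w1 t y1 - w2 t y2) with ((w1 t y1 - w1 t y2) + (w1 t y2 - w2 t y2)) by ring.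
    eapply Rle_trans. apply Rabs_triang. lra. }
  assert (Hpt : forall t, exists D, -3*A/2 <= D <= -A/2 /\
     Rabs ((E1 t - E2 t) - D*(psi1 t - psi2 t)) <= A/4 * Rabs (psi1 t - psi2 t) + S).
  { intro t.
    destruct (core Xi A K1 K2 K3 (dl/2) eps2 Hb (psi1 t) (psi2 t)
      (w11 t (psi1 t)) (w12 t (psi1 t)) (w13 t (psi1 t))
      (w21 t (psi2 t)) (w22 t (psi2 t)) (w23 t (psi2 t)) (Hr1 t) (Hr2 t)
      (proj1 (N11 t _)) (proj1 (N12 t _)) (proj1 (N13 t _))
      (proj1 (N21 t _)) (proj1 (N22 t _)) (proj1 (N23 t _))) as [D [HD HR]].
    exists D. split; [exact HD|].
    unfold E1, E2. eapply Rle_trans; [exact HR|].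
    pose proof (Hdif w11 w21 t (psi1 t) (psi2 t) D1 (L1 t _ _) (W1 t _)) as G1.
    pose proof (Hdif w12 w22 t (psi1 t) (psi2 t) D2 (L2 t _ _) (W2 t _)) as G2.
    pose proof (Hdif w13 w23 t (psi1 t) (psi2 t) D3 (L3 t _ _) (W3 t _)) as G3.
    apply Rmult_le_compat_l with (r := K1) in G1; [|lra].
    apply Rmult_le_compat_l with (r := K2) in G2; [|lra].
    apply Rmult_le_compat_l with (r := K3) in G3; [|lra].
    pose proof (Rabs_pos (psi1 t - psi2 t)) as Hp.
    assert (Kt * eps2 * Rabs (psi1 t - psi2 t) <= A/4 * Rabs (psi1 t - psi2 t))
      by (apply Rmult_le_compat_r; lra).
    unfold Kt in *. rewrite HSe. nra. }
  assert (Hup : forall t, psi1 t - psi2 t <= 4*S/A).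
  { apply (per_bound (fun t => psi1 t - psi2 t) (fun t => E1 t - E2 t) T (4*S/A) HT).
    - intro t. simpl. rewrite Hper1, Hper2. reflexivity.
    - intro t. apply isd_minus; [apply Hps1|apply Hps2].
    - intros t Ht. destruct (Hpt t) as [D [HD HR]].
      set (x := psi1 t - psi2 t) in *. set (y := E1 t - E2 t) in *.
      assert (H4 : 4*S < A*x).
      { apply Rmult_lt_compat_l with (r := A) in Ht; [|lra].
        replace (A * (4*S/A)) with (4*S) in Ht by (field; lra). exact Ht. }
      assert (Hx0 : 0 < x) by nra.
      rewrite (Rabs_right x) in HR by lra. apply Rabs_le_between in HR.
      assert (D*x <= -A/2*x) by (apply Rmult_le_compat_r; lra). nra. }
  assert (Hlo : forall t, -(psi1 t - psi2 t) <= 4*S/A).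
  { apply (per_bound (fun t => -(psi1 t - psi2 t)) (fun t => -(E1 t - E2 t)) T (4*S/A) HT).
    - intro t. simpl. rewrite Hper1, Hper2. reflexivity.
    - intro t. apply isd_opp. apply isd_minus; [apply Hps1|apply Hps2].
    - intros t Ht. destruct (Hpt t) as [D [HD HR]].
      set (x := psi1 t - psi2 t) in *. set (y := E1 t - E2 t) in *.
      assert (H4 : 4*S < A*(-x)).
      { apply Rmult_lt_compat_l with (r := A) in Ht; [|lra].
        replace (A * (4*S/A)) with (4*S) in Ht by (field; lra). exact Ht. }
      assert (Hx0 : x < 0) by nra.
      rewrite (Rabs_left x) in HR by lra. apply Rabs_le_between in HR.
      assert (D*(-x) <= -A/2*(-x)) by (apply Rmult_le_compat_r; lra). nra. }
  assert (Habs : forall t, Rabs (psi1 t - psi2 t) <= 4*S/A).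
  { intro t. apply Rabs_le_between. specialize (Hup t). specialize (Hlo t). lra. }
  assert (Hder : forall t, Rabs (Derive psi1 t - Derive psi2 t) <= 8*S).
  { intro t. rewrite (is_derive_unique _ _ _ (Hps1 t)), (is_derive_unique _ _ _ (Hps2 t)).
    fold (E1 t) (E2 t).
    destruct (Hpt t) as [D [HD HR]]. specialize (Habs t).
    set (x := psi1 t - psi2 t) in *. set (y := E1 t - E2 t) in *.
    replace y with (D*x + (y - D*x)) by ring.
    eapply Rle_trans. apply Rabs_triang. rewrite Rabs_mult.
    assert (HDa : Rabs D <= 3*A/2) by (apply Rabs_le_between; lra).
    assert (Rabs D * Rabs x <= 3*A/2 * (4*S/A)).
    { apply Rmult_le_compat; try apply Rabs_pos; assumption. }
    assert (A/4 * Rabs x <= A/4 * (4*S/A)) by (apply Rmult_le_compat_l; lra).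
    replace (3*A/2 * (4*S/A)) with (6*S) in * by (field; lra).
    replace (A/4 * (4*S/A)) with S in * by (field; lra).
    lra. }
  assert (Hexp : 1 <= exp (A * T)).
  { pose proof (exp_ineq1_le (A*T)). assert (0 <= A*T) by nra. lra. }
  assert (HC : 1 + 8 / (T * eps2) * T * eps2 = 9) by (field; lra).
  assert (HC2 : 0 <= 1 + 8 / (T * eps2) * eps2).
  { assert (0 < 8 / (T*eps2)) by (apply Rdiv_lt_0_compat; [lra| apply Rmult_lt_0_compat; lra]).
    nra. }
  rewrite HXp, HC. split; apply sup1_le; intro t.
  - eapply Rle_trans. apply Habs.
    assert (0 <= S/A) by (apply Rdiv_le_0_compat; lra).
    replace (4*S/A) with (4*(S/A)) by (field; lra).
    replace (9 * exp (A*T) * / A * S) with (9 * exp (A*T) * (S/A)) by (field; lra).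
    nra.
  - eapply Rle_trans. apply Hder. nra.
Qed.
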